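(* Consider Setting A with all nodes running Algorithm 1 (any graph sequence, any gains). Fix a sub-state $j$, a node $i\in\mathcal V\setminus\{j\}$ and a time $k$ such that $\tau^{(j)}_i[k]=m$ with $m\in\mathbb N_+$. Then there exist nodes $v(\tau)\in\mathcal V\setminus\{j\}$, $\tau\in\{k-m+1,\dots,k\}$ (with $v(k)=i$), such that $$\hat z^{(j)}_i[k]=A_{jj}^{m}\,\hat z^{(j)}_j[k-m]+\sum_{q=1}^{j-1}\sum_{\tau=k-m}^{k-1}A_{jj}^{\,k-\tau-1}A_{jq}\,\hat z^{(q)}_{v(\tau+1)}[\tau].$$
   Context: Setting A. Consider the discrete-time LTI system $x[k+1]=Ax[k]$, $k\in\mathbb N$, with $A\in\mathbb R^{n\times n}$, monitored by $N$ nodes $\mathcal V=\{1,\dots,N\}$; node $i$ measures $y_i[k]=C_ix[k]$ with $C_i\in\mathbb R^{r_i\times n}$. Let $C=[C_1^T\ \cdots\ C_N^T]^T$ and assume $(A,C)$ is observable. Fix an invertible $T$ such that $\bar A=T^{-1}AT$ is block lower-triangular with diagonal blocks $A_{11},\dots,A_{NN}$ and off-diagonal blocks $A_{jq}$ ($q<j$), zero blocks above the diagonal, and $C_iT=[C_{i1}\ \cdots\ C_{ii}\ 0\ \cdots\ 0]$ for each $i$, with $(A_{jj},C_{jj})$ observable for every $j$ (such $T$ exists). With $z[k]=T^{-1}x[k]$ partitioned compatibly into sub-states $z^{(1)}[k],\dots,z^{(N)}[k]$, one has $z^{(j)}[k+1]=A_{jj}z^{(j)}[k]+\sum_{q=1}^{j-1}A_{jq}z^{(q)}[k]$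 and $y_j[k]=\sum_{q=1}^{j}C_{jq}z^{(q)}[k]$. Node $j$ is called the source node of sub-state $j$. Communication: at each time $k$ there is a directed graph $\mathcal G[k]=(\mathcal V,\mathcal E[k])$; $(l,i)\in\mathcal E[k]$ means $l$ can send to $i$ at time $k$; $\mathcal N_i[k]=\{l\neq i:(l,i)\in\mathcal E[k]\}$. The union graph over $[k_1,k_2]$ has vertex set $\mathcal V$ and edge set $\bigcup_{\tau=k_1}^{k_2}\mathcal E[\tau]$. Algorithm 1 (run for every sub-state $j$ simultaneously). Each node $i$ keeps an estimate $\hat z^{(j)}_i[k]$ (arbitrary initial value) and a freshness index $\tau^{(j)}_i[k]\in\mathbb N\cup\{\omega\}$, where $\omega$ is a special symbol; initially $\tau^{(j)}_j[0]=0$ and $\tau^{(j)}_i[0]=\omega$ for $i\ne j$. Source node $j$: $\tau^{(j)}_j[k]=0$ for all $k$, and $\hat z^{(j)}_j[k+1]=(A_{jj}-L_jC_{jj})\hat z^{(j)}_j[k]+\sum_{q=1}^{j-1}(A_{jq}-L_jC_{jq})\hat z^{(q)}_j[k]+L_jy_j[k]$, where $L_j$ is an observer gain. Non-source node $i\neq j$ at time $k$: let $\mathcal M^{(j)}_i[k]=\{l\in\mathcal N_i[k]:\tau^{(j)}_l[k]\neq\omega\}$; if $\tau^{(j)}_i[k]=\omega$ let $\mathcal F^{(j)}_i[k]=\mathcal M^{(j)}_i[k]$, otherwise $\mathcal F^{(j)}_i[k]=\{l\in\mathcal M^{(j)}_i[k]:\tau^{(j)}_l[k]<\tau^{(j)}_i[k]\}$.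 If $\mathcal F^{(j)}_i[k]\ne\emptyset$, pick $u\in\arg\min_{l\in\mathcal F^{(j)}_i[k]}\tau^{(j)}_l[k]$ and set $\tau^{(j)}_i[k+1]=\tau^{(j)}_u[k]+1$ and $\hat z^{(j)}_i[k+1]=A_{jj}\hat z^{(j)}_u[k]+\sum_{q=1}^{j-1}A_{jq}\hat z^{(q)}_i[k]$ (''$i$ adopts the information of $u$ at time $k$''). If $\mathcal F^{(j)}_i[k]=\emptyset$, set $\tau^{(j)}_i[k+1]=\omega$ if $\tau^{(j)}_i[k]=\omega$ and $\tau^{(j)}_i[k+1]=\tau^{(j)}_i[k]+1$ otherwise, and $\hat z^{(j)}_i[k+1]=A_{jj}\hat z^{(j)}_i[k]+\sum_{q=1}^{j-1}A_{jq}\hat z^{(q)}_i[k]$ (''$i$ adopts its own information''). *)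

(* Defs.v *)
From HB Require Import structures.
From mathcomp Require Import all_boot all_order all_algebra.
Set Implicit Arguments. Unset Strict Implicit. Unset Printing Implicit Defensive.
Import Order.TTheory GRing.Theory Num.Theory.
Local Open Scope ring_scope.

Definition observable (R : fieldType) (n p : nat)
  (A : 'M[R]_n) (C : 'M[R]_(p, n)) : bool :=
  \rank (\mxcol_(k < n) (C *m A ^+ k)) == n.

(* Freshness indices: [None] is the special symbol omega. *)
Definition freshness := option nat.

Definition fsucc (t : freshness) : freshness := omap S t.

Definition inF (N : nat) (E : nat -> rel 'I_N)
  (tau : 'I_N -> nat -> freshness) (i : 'I_N) (k : nat) (l : 'I_N) : bool :=
  [&& l != i, E k l i &
     match tau l k, tau i k with
     | Some a, None => true
     | Some a, Some b => (a < b)%N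
     | None, _ => false
     end].

Definition lower_sum (R : ringType) (N : nat) (d : 'I_N -> nat)
  (Ab : forall j q : 'I_N, 'M[R]_(d j, d q))
  (zhat : forall q : 'I_N, 'I_N -> nat -> 'cV[R]_(d q))
  (j i : 'I_N) (k : nat) : 'cV[R]_(d j) :=
  \sum_(q < N | (q < j)%N) Ab j q *m zhat q i k.

(* [alg1_run ... tau zhat] : (tau, zhat) is a run of Algorithm 1, executed for
   every sub-state j simultaneously, for the graph sequence E (E k l i means
   that l can send to i at time k), with gains L and measurements y.
   tau j i k = tau^{(j)}_i[k], zhat j i k = \hat z^{(j)}_i[k].
   Initial estimates are arbitrary; ties in the argmin are broken arbitrarily. *)
Definition alg1_run (R : ringType) (N : nat) (d r : 'I_N -> nat)
  (Ab : forall j q : 'I_N, 'M[R]_(d j, d q))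
  (Cb : forall i q : 'I_N, 'M[R]_(r i, d q))
  (L : forall j : 'I_N, 'M[R]_(d j, r j))
  (y : forall i : 'I_N, nat -> 'cV[R]_(r i))
  (E : nat -> rel 'I_N)
  (tau : 'I_N -> 'I_N -> nat -> freshness)
  (zhat : forall q : 'I_N, 'I_N -> nat -> 'cV[R]_(d q)) : Prop :=
  (forall j i : 'I_N, i != j -> tau j i 0%N = None) /\
  (forall (j : 'I_N) (k : nat), tau j j k = Some 0%N) /\
  (forall (j : 'I_N) (k : nat),
     zhat j j k.+1 =
       (Ab j j - L j *m Cb j j) *m zhat j j k
       + \sum_(q < N | (q < j)%N) (Ab j q - L j *m Cb j q) *m zhat q j k
       + L j *m y j k) /\
  (forall (j i : 'I_N) (k : nat), i != j ->
     ((exists l, inF E (tau j) i k l) ->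
        exists u tu, [/\ inF E (tau j) i k u, tau j u k = Some tu,
          (forall l t, inF E (tau j) i k l -> tau j l k = Some t -> (tu <= t)%N),
          tau j i k.+1 = Some tu.+1 &
          zhat j i k.+1 = Ab j j *m zhat j u k + lower_sum Ab zhat j i k]) /\
     ((forall l, ~~ inF E (tau j) i k l) ->
        tau j i k.+1 = fsucc (tau j i k) /\
        zhat j i k.+1 = Ab j j *m zhat j i k + lower_sum Ab zhat j i k)).

(* Main.v *)
Require Import Defs.
From HB Require Import structures.
From mathcomp Require Import all_boot all_order all_algebra.
Import Order.TTheory GRing.Theory Num.Theory.
Local Open Scope ring_scope.

Lemma step_alg (R : ringType) (N : nat) (d : 'I_N -> nat)
  (Ab : forall j q : 'I_N, 'M[R]_(d j, d q))
  (zhat : forall q : 'I_N, 'I_N -> nat -> 'cV[R]_(d q))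
  (j i : 'I_N) (v' : nat -> 'I_N) k tu (Z : 'cV[R]_(d j)) :
  Ab j j *m (Ab j j ^+ tu *m Z + \sum_(q < N | (q < j)%N)
      \sum_(k - tu <= t < k) Ab j j ^+ (k - t - 1) *m Ab j q *m zhat q (v' t.+1) t)
  + lower_sum Ab zhat j i k
  = Ab j j ^+ tu.+1 *m Z + \sum_(q < N | (q < j)%N)
      \sum_(k.+1 - tu.+1 <= t < k.+1) Ab j j ^+ (k.+1 - t - 1) *m Ab j q *m
         zhat q ((fun t => if t == k.+1 then i else v' t) t.+1) t.
Proof.
have hS n : Ab j j *m Ab j j ^+ n = Ab j j ^+ n.+1 by rewrite exprS mulmxE.
rewrite subSS mulmxDr mulmxA hS -addrA; congr (_ + _).
rewrite /lower_sum mulmx_sumr -big_split /=; apply: eq_bigr => q _.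
rewrite big_nat_recr /= ?leq_subr // mulmx_sumr; congr (_ + _).
  apply: eq_big_nat => t /andP[_ ht].
  rewrite eqSS (ltn_eqF ht) subSn ?(ltnW ht) // !mulmxA hS !subn1 /= prednK //.
  by rewrite subn_gt0.
by rewrite eqxx subSnn subnn expr0 mul1mx.
Qed.

Lemma tau_nz (R : ringType) (N : nat) (d r : 'I_N -> nat)
  (Ab : forall j q : 'I_N, 'M[R]_(d j, d q))
  (Cb : forall i q : 'I_N, 'M[R]_(r i, d q))
  (L : forall j : 'I_N, 'M[R]_(d j, r j))
  (y : forall i : 'I_N, nat -> 'cV[R]_(r i))
  (E : nat -> rel 'I_N) tau zhat
  (hrun : alg1_run Ab Cb L y E tau zhat) (j : 'I_N) :
  forall k i, i != j -> tau j i k <> Some 0%N.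
Proof.
case: hrun => h0 [_ [_ hn]].
elim=> [|k IH] i hij; first by rewrite h0.
have [hF hE] := hn j i k hij.
case: (boolP [exists l, inF E (tau j) i k l]).
  move/existsP => ex; have [u [tu [_ _ _ -> _]]] := hF ex; by [].
move=> nex; have nF : forall l, ~~ inF E (tau j) i k l.
  move=> l; apply/negP => hl; move/negP: nex; apply; apply/existsP; by exists l.
have [-> _] := hE nF.
by case: (tau j i k).
Qed.

Lemma main (R : ringType) (N : nat) (d r : 'I_N -> nat)
  (Ab : forall j q : 'I_N, 'M[R]_(d j, d q))
  (Cb : forall i q : 'I_N, 'M[R]_(r i, d q))
  (L : forall j : 'I_N, 'M[R]_(d j, r j))
  (y : forall i : 'I_N, nat -> 'cV[R]_(r i))
  (E : nat -> rel 'I_N) tau zhat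
  (hrun : alg1_run Ab Cb L y E tau zhat) (j : 'I_N) :
  forall k i m, i != j -> (0 < m)%N -> tau j i k = Some m ->
  exists v : nat -> 'I_N,
    [/\ forall t, (k - m + 1 <= t <= k)%N -> v t != j,
        v k = i &
        zhat j i k =
          Ab j j ^+ m *m zhat j j (k - m)%N
          + \sum_(q < N | (q < j)%N)
              \sum_(k - m <= t < k) Ab j j ^+ (k - t - 1) *m Ab j q *m zhat q (v t.+1) t].
Proof.
have hnz := @tau_nz _ _ _ _ _ _ _ _ _ _ _ hrun j.
case: hrun => h0 [hs [_ hn]].
elim=> [|k IH] i m hij hm htau; first by rewrite h0 in htau.
have step : forall u tu, tau j u k = Some tu -> m = tu.+1 ->
    zhat j i k.+1 = Ab j j *m zhat j u k + lower_sum Ab zhat j i k ->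
    exists v : nat -> 'I_N,
    [/\ forall t, (k.+1 - m + 1 <= t <= k.+1)%N -> v t != j,
        v k.+1 = i &
        zhat j i k.+1 =
          Ab j j ^+ m *m zhat j j (k.+1 - m)%N
          + \sum_(q < N | (q < j)%N)
              \sum_(k.+1 - m <= t < k.+1) Ab j j ^+ (k.+1 - t - 1) *m Ab j q *m zhat q (v t.+1) t].
  move=> u tu hu -> hz.
  case: tu hu => [|tu] hu.
    case: (eqVneq u j) => [euj | uj]; last by have := hnz k u uj.
    subst u; exists (fun _ => i); split => //.
    rewrite hz subSS subn0 expr1 /lower_sum; congr (_ + _).
    apply: eq_bigr => q _; by rewrite big_nat1 subSnn subnn expr0 mul1mx.
  have uj : u != j by apply/eqP => euj; rewrite euj hs in hu.
  have [v' [hv1 hv2 hv3]] := IH u tu.+1 uj (ltn0Sn _) hu.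
  exists (fun t => if t == k.+1 then i else v' t); split.
  - move=> t /andP[h1 h2]; case: ifP => [_|/negbT ht]; first exact: hij.
    apply: hv1; rewrite subSS in h1; rewrite h1 /=.
    by rewrite -ltnS ltn_neqAle ht h2.
  - by rewrite eqxx.
  - by rewrite hz hv3 step_alg.
have [hF hE] := hn j i k hij.
case: (boolP [exists l, inF E (tau j) i k l]).
  move/existsP => ex; have [u [tu [_ hu _ ht hz]]] := hF ex.
  rewrite ht in htau; case: htau => hm2; exact: step hu (esym hm2) hz.
move=> nex; have nF : forall l, ~~ inF E (tau j) i k l.
  move=> l; apply/negP => hl; move/negP: nex; apply; apply/existsP; by exists l.
have [ht hz] := hE nF.
rewrite ht in htau; move: htau.
case hti: (tau j i k) => [t|] //= [ht'].
exact: step hti (esym ht') hz.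
Qed.

Theorem lemma3 (R : realFieldType) (N : nat) (d r : 'I_N -> nat)
  (A : 'M[R]_(\sum_(i < N) d i))
  (Cm : forall i : 'I_N, 'M[R]_(r i, \sum_(i < N) d i))
  (T : 'M[R]_(\sum_(i < N) d i))
  (Ab : forall j q : 'I_N, 'M[R]_(d j, d q))
  (Cb : forall i q : 'I_N, 'M[R]_(r i, d q))
  (L : forall j : 'I_N, 'M[R]_(d j, r j))
  (x : nat -> 'cV[R]_(\sum_(i < N) d i))
  (E : nat -> rel 'I_N)
  (tau : 'I_N -> 'I_N -> nat -> freshness)
  (zhat : forall q : 'I_N, 'I_N -> nat -> 'cV[R]_(d q))
  (* Setting A *)
  (hobs : observable A (\mxcol_(i < N) Cm i))
  (hT : T \in unitmx)
  (hAbar : invmx T *m A *m T = \mxblock_(j < N, q < N) Ab j q)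
  (hupper : forall j q : 'I_N, (j < q)%N -> Ab j q = 0)
  (hC : forall i : 'I_N, Cm i *m T = \mxrow_(q < N) Cb i q)
  (hCzero : forall i q : 'I_N, (i < q)%N -> Cb i q = 0)
  (hobsj : forall j : 'I_N, observable (Ab j j) (Cb j j))
  (hx : forall k, x k.+1 = A *m x k)
  (* all nodes run Algorithm 1, y_i[k] = C_i x[k] *)
  (hrun : alg1_run Ab Cb L (fun i k => Cm i *m x k) E tau zhat)
  (j i : 'I_N) (k m : nat) (hij : i != j) (hm : (0 < m)%N)
  (htau : tau j i k = Some m) :
  exists v : nat -> 'I_N,
    [/\ forall t, (k - m + 1 <= t <= k)%N -> v t != j,
        v k = i &
        zhat j i k =
          Ab j j ^+ m *m zhat j j (k - m)%N
          + \sum_(q < N | (q < j)%N)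
              \sum_(k - m <= t < k) Ab j j ^+ (k - t - 1) *m Ab j q *m zhat q (v t.+1) t].
Proof.
exact: (@main _ _ _ _ _ _ _ _ _ _ _ hrun j k i m hij hm htau).
Qed.
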